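(* Under the setting below, for every $x\in\mathbb R^d$ and every realization of the algorithm, $$\sum_{t\in\mathcal B}\gamma\big(f(x^t)-f(x)\big)+\sum_{t\in\mathcal N}\gamma\big(c-g(x)\big)\le\frac12\|x^0-x\|^2+\frac12\sum_{t=0}^{T-1}\gamma^2\|h^t\|^2+\sum_{t=0}^{T-1}\gamma^2\|h^t\|\,\|e^t\|+\sum_{t=0}^{T-1}\gamma\|h^t\|\,\|\hat e^t\|.$$
   Context: Problem: minimize $f(x)=\frac1n\sum_{i=1}^nf_i(x)$ subject to $g(x)=\frac1n\sum_{i=1}^ng_i(x)\le0$, with $f_i,g_i:\mathbb R^d\to\mathbb R$ convex. Compressors $\mathcal C_0,\mathcal C_1,\dots,\mathcal C_n$ are arbitrary (possibly randomized) maps $\mathbb R^d\to\mathbb R^d$. Safe-EF with bidirectional compression: given $x^0=w^0\in\mathbb R^d$, $\gamma,c>0$, $e_i^0=0$; for $t=0,\dots,T-1$: each worker sets $h_i^t=f_i'(x^t)\in\partial f_i(x^t)$ if $g(x^t)\le c$ and $h_i^t=g_i'(x^t)\in\partial g_i(x^t)$ otherwise; $v_i^t=\mathcal C_i(e_i^t+h_i^t)$; $e_i^{t+1}=e_i^t+h_i^t-v_i^t$; $v^t=\frac1n\sum_iv_i^t$, $w^{t+1}=w^t-\gamma v^t$, $x^{t+1}=x^t+\mathcal C_0(w^{t+1}-x^t)$. Notation: $h^t=\frac1n\sum_ih_i^t$, $e^t=\frac1n\sum_ie_i^t$, $\hat e^t=w^t-x^t$, $\mathcal B=\{t\in\{0,\dots,T-1\}:g(x^t)\le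 c\}$, $\mathcal N=\{0,\dots,T-1\}\setminus\mathcal B$. *)

(* Defs.v *)
From HB Require Import structures.
From mathcomp Require Import all_boot all_order all_algebra.
From mathcomp Require Import reals.
Set Implicit Arguments. Unset Strict Implicit. Unset Printing Implicit Defensive.
Import Order.TTheory GRing.Theory Num.Theory.
Local Open Scope ring_scope.

Section Defs.
Variables (R : realType) (d : nat).
Notation V := 'rV[R]_d.

Definition dotv (u v : V) : R := \sum_(k < d) u 0 k * v 0 k.
Definition enorm (u : V) : R := Num.sqrt (dotv u u).

Definition convex_fun (f : V -> R) : Prop :=
  forall (x y : V) (a : R), 0 <= a -> a <= 1 ->
    f (a *: x + (1 - a) *: y) <= a * f x + (1 - a) * f y.

Definition is_subgrad (f : V -> R) (s x : V) : Prop :=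
  forall y : V, f x + dotv s (y - x) <= f y.

Definition avgf (n : nat) (F : 'I_n -> V -> R) (x : V) : R :=
  n%:R^-1 * \sum_(i < n) F i x.
Definition avgv (n : nat) (v : 'I_n -> V) : V :=
  n%:R^-1 *: \sum_(i < n) v i.

(* Safe-EF with bidirectional compression, for one realization:
   - df t i y / dg t i y : the (sub)gradient returned by worker i at step t
     when queried at y (only its value at y = x^t matters);
   - C0 t : realization of the server compressor C_0 at step t;
   - C t i : realization of the worker compressor C_i at step t. *)
Variables (n : nat) (fi gi : 'I_n -> V -> R) (x0 : V) (gamma c : R)
  (df dg : nat -> 'I_n -> V -> V)
  (C0 : nat -> V -> V) (C : nat -> 'I_n -> V -> V).

Fixpoint sef_state (t : nat) : V * V * ('I_n -> V) :=
  match t with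
  | 0 => (x0, x0, fun _ => 0)
  | t'.+1 =>
    let: (x, w, e) := sef_state t' in
    let h i := if avgf gi x <= c then df t' i x else dg t' i x in
    let v i := C t' i (e i + h i) in
    let e' i := e i + h i - v i in
    let w' := w - gamma *: avgv v in
    (x + C0 t' (w' - x), w', e')
  end.

Definition sef_x t := (sef_state t).1.1.
Definition sef_w t := (sef_state t).1.2.
Definition sef_e t i := (sef_state t).2 i.
Definition sef_hi t i :=
  if avgf gi (sef_x t) <= c then df t i (sef_x t) else dg t i (sef_x t).
Definition sef_h t := avgv (sef_hi t).
Definition sef_ebar t := avgv (sef_e t).
Definition sef_ehat t := sef_w t - sef_x t.

End Defs.

(* Main.v *)
Require Import Defs.
From HB Require Import structures.
From mathcomp Require Import all_boot all_order all_algebra.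
From mathcomp Require Import reals.
From mathcomp Require Import ring lra.
Import Order.TTheory GRing.Theory Num.Theory.
Local Open Scope ring_scope.

Section Helpers.
Variables (R : realType) (d : nat).
Notation V := 'rV[R]_d.

Lemma dotvDl (u w v : V) : dotv (u + w) v = dotv u v + dotv w v.
Proof. rewrite /dotv -big_split /=; apply: eq_bigr => k _; rewrite mxE; ring. Qed.
Lemma dotvZl (a : R) (u v : V) : dotv (a *: u) v = a * dotv u v.
Proof. rewrite /dotv mulr_sumr; apply: eq_bigr => k _; rewrite mxE; ring. Qed.
Lemma dotvC (u v : V) : dotv u v = dotv v u.
Proof. rewrite /dotv; apply: eq_bigr => k _; ring. Qed.
Lemma dotvNl (u v : V) : dotv (- u) v = - dotv u v.
Proof. by rewrite -scaleN1r dotvZl mulN1r. Qed.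
Lemma dotvBl (u w v : V) : dotv (u - w) v = dotv u v - dotv w v.
Proof. by rewrite dotvDl dotvNl. Qed.
Lemma dotvDr (u w v : V) : dotv v (u + w) = dotv v u + dotv v w.
Proof. by rewrite dotvC dotvDl !(dotvC v). Qed.
Lemma dotvZr (a : R) (u v : V) : dotv v (a *: u) = a * dotv v u.
Proof. by rewrite dotvC dotvZl dotvC. Qed.
Lemma dotvNr (u v : V) : dotv v (- u) = - dotv v u.
Proof. by rewrite dotvC dotvNl dotvC. Qed.
Lemma dotvBr (u w v : V) : dotv v (u - w) = dotv v u - dotv v w.
Proof. by rewrite dotvDr dotvNr. Qed.
Lemma dotv_ge0 (u : V) : 0 <= dotv u u.
Proof. by apply: sumr_ge0 => k _; rewrite -expr2 sqr_ge0. Qed.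
Lemma enorm_sq (u : V) : enorm u ^+ 2 = dotv u u.
Proof. by rewrite /enorm sqr_sqrtr // dotv_ge0. Qed.
Lemma enorm_ge0 (u : V) : 0 <= enorm u.
Proof. exact: sqrtr_ge0. Qed.
Lemma enormN (u : V) : enorm (- u) = enorm u.
Proof. by rewrite /enorm dotvNl dotvNr opprK. Qed.

Lemma dotv0 (u v : V) : dotv u u = 0 -> dotv u v = 0.
Proof.
move=> H.
have Hk : forall k : 'I_d, u 0 k * u 0 k = 0.
  move=> k; apply: (psumr_eq0P _ H) => //= j _.
  by rewrite -expr2 sqr_ge0.
rewrite /dotv big1 // => k _.
by have /eqP := Hk k; rewrite mulf_eq0 orbb => /eqP ->; rewrite mul0r.
Qed.

Lemma cs (u v : V) : dotv u v <= enorm u * enorm v.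
Proof.
have Hu := enorm_sq u; have Hv := enorm_sq v.
have ha := enorm_ge0 u; have hb := enorm_ge0 v.
set a := enorm u in Hu ha *; set b := enorm v in Hv hb *.
have [a0|apos] := eqVneq a 0.
  rewrite dotv0 ?a0 ?mul0r // -Hu a0; ring.
have [b0|bpos] := eqVneq b 0.
  rewrite dotvC dotv0 ?b0 ?mulr0 // -Hv b0; ring.
have ap : 0 < a by rewrite lt_def apos ha.
have bp : 0 < b by rewrite lt_def bpos hb.
have := dotv_ge0 (b *: u - a *: v).
rewrite !dotvBl !dotvBr !dotvZl !dotvZr (dotvC v u) -Hu -Hv.
set p := dotv u v => H.
have abp : 0 < a * b by rewrite mulr_gt0.
have : 0 <= (a * b) * (a * b - p) by nra.
by rewrite pmulr_rge0 // subr_ge0.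
Qed.

Lemma avgv_dot (n : nat) (w : 'I_n -> V) (y : V) :
  dotv (avgv w) y = n%:R^-1 * \sum_(i < n) dotv (w i) y.
Proof.
rewrite /avgv dotvZl; congr (_ * _).
elim/big_rec2: _ => [|i s1 s2 _ <-]; first by rewrite /dotv big1 // => k _; rewrite mxE mul0r.
by rewrite dotvDl.
Qed.

Lemma avgvD (n : nat) (w1 w2 : 'I_n -> V) :
  avgv (fun i => w1 i + w2 i) = avgv w1 + avgv w2.
Proof. by rewrite /avgv big_split scalerDr. Qed.
Lemma avgvN (n : nat) (w1 : 'I_n -> V) :
  avgv (fun i => - w1 i) = - avgv w1.
Proof. by rewrite /avgv sumrN scalerN. Qed.

Lemma tele (T : nat) (F G A : nat -> R) :
  (forall t, 0 <= A t) ->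
  (forall t, F t <= 2^-1 * (A t - A t.+1) + G t) ->
  \sum_(t < T) F t <= 2^-1 * A 0%N + \sum_(t < T) G t.
Proof.
move=> A0 H.
suff: \sum_(t < T) F t + 2^-1 * A T <= 2^-1 * A 0%N + \sum_(t < T) G t.
  by have := A0 T; lra.
elim: T => [|T IH]; first by rewrite !big_ord0; lra.
rewrite !big_ord_recr /=. have := H T. lra.
Qed.

End Helpers.

Lemma zl (V : zmodType) (W X E H : V) : W - X - (E + H - X) = W - E - H.
Proof. by rewrite opprB addrA subrK opprD addrA. Qed.

Section Alg.
Variables (R : realType) (d n : nat)
  (fi gi : 'I_n -> 'rV[R]_d -> R) (x0 : 'rV[R]_d) (gamma c : R)
  (df dg : nat -> 'I_n -> 'rV[R]_d -> 'rV[R]_d)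
  (C0 : nat -> 'rV[R]_d -> 'rV[R]_d)
  (C : nat -> 'I_n -> 'rV[R]_d -> 'rV[R]_d).

Let w := sef_w gi x0 gamma c df dg C0 C.
Let e := sef_e gi x0 gamma c df dg C0 C.
Let hi := sef_hi gi x0 gamma c df dg C0 C.

Lemma step_w t : w t.+1 = w t - gamma *: avgv (fun i => C t i (e t i + hi t i)).
Proof.
rewrite /w /e /hi /sef_w /sef_e /sef_hi /sef_x /=.
by case: (sef_state _ _ _ _ _ _ _ _ t) => [[x' w'] e'].
Qed.

Lemma step_e t i : e t.+1 i = e t i + hi t i - C t i (e t i + hi t i).
Proof.
rewrite /w /e /hi /sef_w /sef_e /sef_hi /sef_x /=.
by case: (sef_state _ _ _ _ _ _ _ _ t) => [[x' w'] e'].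
Qed.

Definition zz t := w t - gamma *: sef_ebar gi x0 gamma c df dg C0 C t.

Lemma step_z t : zz t.+1 = zz t - gamma *: sef_h gi x0 gamma c df dg C0 C t.
Proof.
rewrite /zz /sef_ebar /sef_h step_w.
rewrite (_ : avgv (sef_e gi x0 gamma c df dg C0 C t.+1) =
   avgv (e t) + avgv (hi t) - avgv (fun i => C t i (e t i + hi t i))).
  by rewrite scalerBr scalerDr zl.
rewrite -avgvN -!avgvD /avgv; congr (_ *: _); apply: eq_bigr => i _.
by rewrite -/(e t.+1 i) step_e.
Qed.

Lemma z0 : zz 0 = x0.
Proof.
rewrite /zz /w /sef_ebar /sef_w /avgv /=.
by rewrite /sef_e /= big1 // scaler0 scaler0 subr0.
Qed.

End Alg.

Lemma dot_expand (R : realType) (d : nat) (a h : 'rV[R]_d) (g : R) :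
  dotv (a - g *: h) (a - g *: h) = dotv a a - 2 * g * dotv h a + g ^+ 2 * dotv h h.
Proof. rewrite !dotvBl !dotvBr !dotvZl !dotvZr (dotvC _ _ a h); ring. Qed.

Lemma fin (R : realType) (F g p1 p2 p3 A H Nh Ne Nf : R) : 0 <= g ->
  F <= g * p1 -> - p2 <= Nh * Nf -> p3 <= Nh * Ne ->
  F <= 2^-1 * (A - (A - 2 * g * (p1 + p2 - g * p3) + g ^+ 2 * H))
       + (2^-1 * (g ^+ 2 * H) + g ^+ 2 * Nh * Ne + g * Nh * Nf).
Proof.
move=> g0 h1 h2 h3.
have -> : 2^-1 * (A - (A - 2 * g * (p1 + p2 - g * p3) + g ^+ 2 * H))
       + (2^-1 * (g ^+ 2 * H) + g ^+ 2 * Nh * Ne + g * Nh * Nf)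
   = g * p1 + g * (p2 + Nh * Nf) + g ^+ 2 * (Nh * Ne - p3) by field.
have : 0 <= g * (p2 + Nh * Nf) by apply: mulr_ge0 => //; lra.
have : 0 <= g ^+ 2 * (Nh * Ne - p3) by apply: mulr_ge0; [exact: sqr_ge0 | lra].
lra.
Qed.

Lemma zl2 (V : zmodType) (W G X Y : V) : W - G - X = (Y - X) + (W - Y) - G.
Proof. rewrite -!addrA (addrCA Y) (addrCA Y) addNKr [RHS]addrC addrA. by []. Qed.

Theorem mainTheorem7 (R : realType) (d n : nat)
  (fi gi : 'I_n -> 'rV[R]_d -> R) (x0 : 'rV[R]_d) (gamma c : R)
  (df dg : nat -> 'I_n -> 'rV[R]_d -> 'rV[R]_d)
  (C0 : nat -> 'rV[R]_d -> 'rV[R]_d)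
  (C : nat -> 'I_n -> 'rV[R]_d -> 'rV[R]_d) (T : nat) :
  (0 < n)%N -> 0 < gamma -> 0 < c ->
  (forall i, convex_fun (fi i)) -> (forall i, convex_fun (gi i)) ->
  (forall t i, is_subgrad (fi i)
     (df t i (sef_x gi x0 gamma c df dg C0 C t))
     (sef_x gi x0 gamma c df dg C0 C t)) ->
  (forall t i, is_subgrad (gi i)
     (dg t i (sef_x gi x0 gamma c df dg C0 C t))
     (sef_x gi x0 gamma c df dg C0 C t)) ->
  forall x : 'rV[R]_d,
  let xt := sef_x gi x0 gamma c df dg C0 C in
  let ht := sef_h gi x0 gamma c df dg C0 C in
  let et := sef_ebar gi x0 gamma c df dg C0 C in
  let eh := sef_ehat gi x0 gamma c df dg C0 C in
  \sum_(t < T | avgf gi (xt t) <= c) gamma * (avgf fi (xt t) - avgf fi x)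
  + \sum_(t < T | ~~ (avgf gi (xt t) <= c)) gamma * (c - avgf gi x)
  <= 2^-1 * enorm (x0 - x) ^+ 2
     + 2^-1 * \sum_(t < T) gamma ^+ 2 * enorm (ht t) ^+ 2
     + \sum_(t < T) gamma ^+ 2 * enorm (ht t) * enorm (et t)
     + \sum_(t < T) gamma * enorm (ht t) * enorm (eh t).
Proof.
move=> _ gp _ _ _ Hf Hg x; cbv zeta.
set xt := sef_x gi x0 gamma c df dg C0 C.
set ht := sef_h gi x0 gamma c df dg C0 C.
set et := sef_ebar gi x0 gamma c df dg C0 C.
set eh := sef_ehat gi x0 gamma c df dg C0 C.
rewrite big_mkcond [X in _ + X <= _]big_mkcond -big_split /=.
set zt := zz _ _ _ gi x0 gamma c df dg C0 C.
pose F := fun t : nat => (if avgf gi (xt t) <= c then gamma * (avgf fi (xt t) - avgf fi x) else 0)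
   + (if ~~ (avgf gi (xt t) <= c) then gamma * (c - avgf gi x) else 0).
pose G := fun t : nat => 2^-1 * (gamma ^+ 2 * enorm (ht t) ^+ 2)
   + gamma ^+ 2 * enorm (ht t) * enorm (et t) + gamma * enorm (ht t) * enorm (eh t).
pose A := fun t : nat => dotv (zt t - x) (zt t - x).
have key : forall t : nat, F t <= 2^-1 * (A t - A t.+1) + G t.
  move=> t; rewrite /F /A /G.
  have ez1 : zt t.+1 - x = (zt t - x) - gamma *: ht t.
    by rewrite /zt step_z addrAC.
  have ez : zt t - x = (xt t - x) + eh t - gamma *: et t.
    by rewrite /zt /zz /eh /sef_ehat (zl2 _ _ _ _ (xt t)).
  rewrite ez1.
  set a := zt t - x; set h := ht t.
  have E : dotv (a - gamma *: h) (a - gamma *: h)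
     = dotv a a - 2 * gamma * dotv h a + gamma ^+ 2 * dotv h h.
    exact: dot_expand.
  have Eh : dotv h a = dotv h (xt t - x) + dotv h (eh t) - gamma * dotv h (et t).
    by rewrite /a ez (dotvBr _ _ (xt t - x + eh t) (gamma *: et t)) (dotvDr _ _ (xt t - x) (eh t)) (dotvZr _ _ gamma (et t)).
  have F2 : - dotv h (eh t) <= enorm h * enorm (eh t).
    by rewrite -dotvNr -(enormN _ _ (eh t)) cs.
  have F3 : dotv h (et t) <= enorm h * enorm (et t) by exact: cs.
  have F2' := ler_wpM2l (ltW gp) F2.
  have F3' := ler_wpM2l (ltW (mulr_gt0 gp gp)) F3.
  have F1 : (if avgf gi (xt t) <= c then gamma * (avgf fi (xt t) - avgf fi x) else 0)
   + (if ~~ (avgf gi (xt t) <= c) then gamma * (c - avgf gi x) else 0)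
   <= gamma * dotv h (xt t - x).
    rewrite /h /ht /sef_h /sef_hi avgv_dot -/(xt t).
    case hP: (avgf gi (xt t) <= c) => /=; rewrite ?addr0 ?add0r.
      apply: ler_wpM2l; first exact: ltW.
      rewrite /avgf -mulrBr -sumrB; apply: ler_wpM2l; first by rewrite invr_ge0 ler0n.
      apply: ler_sum => i _; have := Hf t i x; rewrite -/(xt t) !dotvBr; lra.
    apply: ler_wpM2l; first exact: ltW.
    have hc : c < avgf gi (xt t) by rewrite ltNge hP.
    apply: (@le_trans _ _ (avgf gi (xt t) - avgf gi x)); first lra.
    rewrite /avgf -mulrBr -sumrB; apply: ler_wpM2l; first by rewrite invr_ge0 ler0n.
    apply: ler_sum => i _; have := Hg t i x; rewrite -/(xt t) !dotvBr; lra.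
  rewrite E Eh -[dotv h h]enorm_sq.
  by apply: fin => //; exact: ltW.
apply: (le_trans (tele _ T F G A (fun t => dotv_ge0 _ _ _) key)).
rewrite /A /zt z0 -enorm_sq /G !big_split /= -mulr_sumr.
by rewrite !addrA.
Qed.
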